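(* Let $k\ge3$ be odd and let $(w_1,w_2)$ be a weak CLT pair with $w_1,w_2\in\mathcal V_k$ and $\mathrm{wt}((w_1,w_2))=k$. Then: (i) each $w_i$ ($i=1,2$) satisfies $N^{w_i}_{\{1,1\}}=1$ and $\check w_i$ is a Wigner word of length $k$; (ii) $\mathrm{supp}(w_1)\cap\mathrm{supp}(w_2)=\{1\}$; (iii) $\mathbb{E}[\bar T_{w_1}\bar T_{w_2}]=\mathbb{E}[\xi_{11}^2]$; (iv) summing over a set of representatives of equivalence classes of all such pairs, $\sum_{(w_1,w_2)}\mathbb{E}[\bar T_{w_1}\bar T_{w_2}]=a_k^2\,\mathbb{E}[\xi_{11}^2]$.
   Context: $\{\xi_{ij}\}_{1\le i\le j}$ independent real random variables; $\{\xi_{ii}\}$ i.i.d. with mean zero, all moments finite; $\{\xi_{ij}\}_{i<j}$ i.i.d. with mean zero, $\mathbb{E}[\xi_{12}^2]=1$, all moments finite; $\xi_e=\xi_{\min(i,j),\max(i,j)}$ for $e=\{i,j\}$. A word is a finite sequence $w=(s_1,\dots,s_m)$ of positive integers; $\ell(w)=m$; closed if $s_1=s_m$; $\mathrm{supp}(w)$ its letter set; $E_w=\{\{s_i,s_{i+1}\}:1\le i\le m-1\}$ (undirected; self edge $\{u,u\}$); $N_e^w=\#\{i\le m-1:\{s_i,s_{i+1}\}=e\}$. For $a=(w_1,w_2)$: $\mathrm{wt}(a)=\#(\mathrm{supp}(w_1)\cup\mathrm{supp}(w_2))$, $E_a=E_{w_1}\cup E_{w_2}$, $N_e^a=N_e^{w_1}+N_e^{w_2}$;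 equivalence = bijection of supports mapping one to the other letter by letter. Weak CLT pair: $N_e^a\ge2$ for all $e\in E_a$ and $E_{w_1}\cap E_{w_2}\ne\emptyset$. $\mathcal V_k$ = closed words of length $k+1$ with first letter $1$ having at least one self edge. $\check w$ is obtained from $w$ by deleting each letter equal to its predecessor. A Wigner word is a closed word $w$ with $N_e^w\ge2$ for all $e\in E_w$ and $\mathrm{wt}(w)=(\ell(w)+1)/2$ (single-letter words are also Wigner words). $T_w=\prod_{e\in E_w}\xi_e^{N_e^w}$, $\bar T_w=T_w-\mathbb{E}T_w$. For odd $k$, $a_k$ is the number of equivalence classes of closed words $w$ of length $k+1$ starting at $1$ with $N^w_{\{1,1\}}=1$ and $\check w$ a Wigner word of length $k$. *)

(* Defs.v *)
From HB Require Import structures.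
From mathcomp Require Import all_boot all_order all_algebra.
Set Implicit Arguments. Unset Strict Implicit. Unset Printing Implicit Defensive.
Import Order.TTheory GRing.Theory Num.Theory.

Definition is_word (w : seq nat) : bool := all (fun x => 0 < x) w.

Definition closedw (w : seq nat) : bool :=
  if w is s1 :: s then s1 == last s1 s else false.

(* undirected edge {x,y} encoded as (min, max); self edge {u,u} = (u,u) *)
Definition uedge (x y : nat) : nat * nat := (minn x y, maxn x y).

Definition steps (w : seq nat) : seq (nat * nat) :=
  [seq uedge p.1 p.2 | p <- zip w (behead w)].

Definition edgesw (w : seq nat) : seq (nat * nat) := undup (steps w).

Definition Ncount (e : nat * nat) (w : seq nat) : nat := count_mem e (steps w).

Definition wtw (w : seq nat) : nat := size (undup w).

Definition wtp (a : seq nat * seq nat) : nat := size (undup (a.1 ++ a.2)).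

Definition weak_CLT_pair (a : seq nat * seq nat) : bool :=
  all (fun e => 2 <= Ncount e a.1 + Ncount e a.2) (steps a.1 ++ steps a.2)
  && has (fun e => e \in steps a.2) (steps a.1).

Definition in_V (k : nat) (w : seq nat) : bool :=
  [&& is_word w, size w == k.+1, closedw w, head 0 w == 1 &
      has (fun e : nat * nat => e.1 == e.2) (steps w)].

Fixpoint check_aux (p : nat) (s : seq nat) : seq nat :=
  if s is y :: s' then (if y == p then check_aux y s' else y :: check_aux y s')
  else [::].
Definition checkw (w : seq nat) : seq nat :=
  if w is x :: s then x :: check_aux x s else [::].

Definition wigner (w : seq nat) : bool :=
  [&& closedw w, all (fun e => 2 <= Ncount e w) (steps w) &
      (wtw w).*2 == (size w).+1].

Definition equiv_word (w w' : seq nat) : Prop :=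
  exists f : nat -> nat, {in w &, injective f} /\ map f w = w'.
Definition equiv_pair (a b : seq nat * seq nat) : Prop :=
  exists f : nat -> nat, {in a.1 ++ a.2 &, injective f} /\
    map f a.1 = b.1 /\ map f a.2 = b.2.

(* Moments: md p = E[xi_11^p], mo p = E[xi_12^p].  By independence of the
   entries, expectations of monomials factor over distinct edges. *)
Section Moments.
Variable R : nzRingType.
Variables md mo : nat -> R.
Definition emom (e : nat * nat) (p : nat) : R :=
  if e.1 == e.2 then md p else mo p.
Definition ET (w : seq nat) : R :=
  \prod_(e <- edgesw w) emom e (Ncount e w).
Definition ET2 (w1 w2 : seq nat) : R :=
  \prod_(e <- undup (steps w1 ++ steps w2)) emom e (Ncount e w1 + Ncount e w2).
Definition Ecov (w1 w2 : seq nat) : R := ET2 w1 w2 - ET w1 * ET w2.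
End Moments.

Definition good_pair (k : nat) (a : seq nat * seq nat) : bool :=
  [&& weak_CLT_pair a, in_V k a.1, in_V k a.2 & wtp a == k].

Definition ak_word (k : nat) (w : seq nat) : bool :=
  [&& is_word w, size w == k.+1, closedw w, head 0 w == 1,
      Ncount (1, 1) w == 1, wigner (checkw w) & size (checkw w) == k].

Definition reps (T : eqType) (P : T -> bool) (eqv : T -> T -> Prop) (S : seq T) : Prop :=
  [/\ uniq S, all P S,
      (forall a b, a \in S -> b \in S -> eqv a b -> a = b) &
      (forall a, P a -> exists2 b, b \in S & eqv a b)].

(* Main.v *)
Require Import Defs.
From HB Require Import structures.
From mathcomp Require Import all_boot all_order all_algebra.
From mathcomp Require Import zify.
From Stdlib Require Import ClassicalEpsilon.
Set Implicit Arguments. Unset Strict Implicit. Unset Printing Implicit Defensive.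

Fixpoint st (s : seq nat) : seq (nat * nat) :=
  match s with x :: ((y :: _) as s') => uedge x y :: st s' | _ => [::] end.

Lemma stepsE s : steps s = st s.
Proof.
elim: s => [|x [|y s] IH] //.
by rewrite /steps /= in IH *; rewrite IH.
Qed.

Lemma NcountE e w : Ncount e w = count_mem e (st w).
Proof. by rewrite /Ncount stepsE. Qed.

Lemma uedge_mem x y : ((uedge x y).1 == x) || ((uedge x y).1 == y).
Proof. rewrite /uedge /=; case: (leqP x y) => h; apply/orP; [left|right]; apply/eqP; lia. Qed.

Lemma uedge_mem2 x y : ((uedge x y).2 == x) || ((uedge x y).2 == y).
Proof. rewrite /uedge /=; case: (leqP x y) => h; apply/orP; [right|left]; apply/eqP; lia. Qed.

Lemma uedge_has x y : (x == (uedge x y).1) || (x == (uedge x y).2).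
Proof. rewrite /uedge /=; case: (leqP x y) => h; apply/orP; [left|right]; apply/eqP; lia. Qed.

Lemma uedgeC x y : uedge x y = uedge y x.
Proof. by rewrite /uedge minnC maxnC. Qed.

Lemma uedge_self x y : ((uedge x y).1 == (uedge x y).2) = (x == y).
Proof. rewrite /uedge /=; apply/eqP/eqP; lia. Qed.

Lemma st_mem s e : e \in st s -> (e.1 \in s) && (e.2 \in s).
Proof.
elim: s => [|x [|y s] IH] //= .
rewrite in_cons => /orP [/eqP -> | /IH /andP [h1 h2]].
  case/orP: (uedge_mem x y) => /eqP ->; case/orP: (uedge_mem2 x y) => /eqP ->;
  by rewrite !in_cons !eqxx ?orbT.
by apply/andP; split; rewrite in_cons; apply/orP; right.
Qed.

Lemma size_st s : size (st s) = (size s).-1.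
Proof. by elim: s => [|x [|y s] IH] //=; rewrite IH. Qed.

Lemma stE2 x y s : st (x :: y :: s) = uedge x y :: st (y :: s).
Proof. by []. Qed.

Arguments st : simpl never.

Lemma st_cat x s y t : st (x :: s ++ y :: t) = st (x :: s) ++ uedge (last x s) y :: st (y :: t).
Proof.
elim: s x => [|z s IH] x //.
have -> : x :: (z :: s) ++ y :: t = x :: z :: (s ++ y :: t) by [].
by rewrite !stE2 IH.
Qed.

Lemma mem_st_cat s t e : e \in st (s ++ t) ->
  [\/ e \in st s, e \in st t | e = uedge (last 0 s) (head 0 t)].
Proof.
case: s => [|x s]; first by move=> h; apply: Or32.
case: t => [|y t]; first by rewrite cats0 => h; apply: Or31.
rewrite st_cat mem_cat in_cons => /orP [h|/orP [/eqP h|h]].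
- by apply: Or31.
- by apply: Or33.
- by apply: Or32.
Qed.

Lemma st_rcons x s y : st (rcons (x :: s) y) = rcons (st (x :: s)) (uedge (last x s) y).
Proof. by rewrite -cats1 st_cat cats1 /=. Qed.



Lemma head_rev (s : seq nat) : head 0 (rev s) = last 0 s.
Proof. by case/lastP: s => [|s x] //; rewrite rev_rcons last_rcons. Qed.
Lemma last_rev (s : seq nat) : last 0 (rev s) = head 0 s.
Proof. by case: s => [|x s] //; rewrite rev_cons last_rcons. Qed.

Lemma mem_st_rev s e : (e \in st (rev s)) = (e \in st s).
Proof.
elim: s => [|x s IH] //.
rewrite rev_cons.
case: s IH => [|y s] IH //.
rewrite -cats1.
case E: (rev (y :: s)) => [|z r]; first by move: (f_equal size E); rewrite size_rev.
rewrite st_cat -E mem_cat IH in_cons stE2 in_cons.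
have -> : last z r = y.
  by move: (f_equal (last 0) E); rewrite last_rev /=.
rewrite uedgeC; apply/idP/idP.
  by case/orP=> [->|/orP [->|//]]; rewrite ?orbT.
by case/orP=> [->|->]; rewrite ?orbT.
Qed.

Definition nself (e : nat * nat) : bool := e.1 != e.2.

Lemma undup_cons_size (T : eqType) (x : T) s :
  size (undup (x :: s)) = (x \notin s) + size (undup s).
Proof. by rewrite /=; case: ifP. Qed.

Lemma filter_cons (T : Type) (p : pred T) x s :
  filter p (x :: s) = if p x then x :: filter p s else filter p s.
Proof. by []. Qed.

Lemma keycount u : u != [::] ->
  size (undup u) <= (size (undup [seq e <- st u | nself e])).+1.
Proof.
elim: u => [|x [|y u] IH] // _.
have {}IH := IH isT.
move: IH; rewrite stE2 filter_cons undup_cons_size.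
set F := [seq e <- st (y :: u) | nself e].
set U := y :: u.
move=> IH.
case hx: (x \in U).
  rewrite undup_cons_size hx /U undup_cons_size -/U. move: IH; case: (y \in u) => /= IH; case: ifP => _; rewrite ?undup_cons_size; try (case: (uedge x y \in F) => /=); lia.
have hxy : x != y by apply/eqP=> exy; move: hx; rewrite exy mem_head.
rewrite /nself uedge_self hxy !undup_cons_size.
have -> : (uedge x y \in F) = false.
  apply/negP; rewrite mem_filter => /andP [_ /st_mem /andP [h1 h2]].
  by case/orP: (uedge_has x y) => /eqP h; [move: h1|move: h2]; rewrite -h -/U hx.
rewrite hx; move: IH; case: (y \in u) => /= IH; lia.
Qed.

Lemma size_undup_sub (T : eqType) (s t : seq T) : {subset s <= t} -> size (undup s) <= size (undup t).
Proof. by move=> h; apply: uniq_leq_size; [apply: undup_uniq | move=> e; rewrite !mem_undup; apply: h]. Qed.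

Lemma keycount_sub u F : u != [::] -> {subset [seq e <- st u | nself e] <= F} ->
  size (undup u) <= (size (undup F)).+1.
Proof. by move=> h1 h2; apply: (leq_trans (keycount h1)); rewrite ltnS; apply: size_undup_sub. Qed.

Lemma st_split w e : e \in st w -> exists x s y t, w = x :: s ++ y :: t /\ e = uedge (last x s) y.
Proof.
elim: w => [|a [|b w] IH] //.
rewrite stE2 in_cons => /orP [/eqP -> | /IH [x [s [y [t [E1 E2]]]]]].
  by exists a, [::], b, w.
by exists a, (x :: s), y, t; rewrite E1 E2.
Qed.

Lemma sum_eqn (x : nat * nat) U : \sum_(e <- U) (x == e) = count_mem x U.
Proof. by elim: U => [|a U IH]; rewrite ?big_nil ?big_cons ?IH // eq_sym. Qed.

Lemma sum_count U (l : seq (nat * nat)) : uniq U -> {subset l <= U} ->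
  \sum_(e <- U) count_mem e l = size l.
Proof.
move=> uU; elim: l => [|x l IH] sub.
  by rewrite big1_seq.
rewrite /= big_split /= IH; last by move=> z hz; apply: sub; rewrite in_cons hz orbT.
by rewrite sum_eqn (count_uniq_mem _ uU) (sub x (mem_head _ _)).
Qed.

Lemma st_check_aux p s : st (p :: check_aux p s) = [seq e <- st (p :: s) | nself e].
Proof.
elim: s p => [|y s IH] p //.
rewrite stE2 filter_cons /nself uedge_self /=.
case: (eqVneq y p) => [-> | hne] /=; first exact: IH.
by rewrite stE2 IH.
Qed.

Lemma mem_check_aux p s z : (z \in p :: check_aux p s) = (z \in p :: s).
Proof.
elim: s p => [|y s IH] p //=.
case: (eqVneq y p) => [-> | hne].
  by rewrite IH !in_cons orbA orbb.
by rewrite in_cons IH !in_cons.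
Qed.

Lemma last_check_aux p s : last p (check_aux p s) = last p s.
Proof. by elim: s p => [|y s IH] p //=; case: (eqVneq y p) => [->|_] /=; rewrite IH. Qed.

Lemma uedge_inj a b c d : uedge a b = uedge c d -> (a = c /\ b = d) \/ (a = d /\ b = c).
Proof.
rewrite /uedge => -[h1 h2].
case: (leqP a b) => hab; case: (leqP c d) => hcd.
- left; lia.
- right; lia.
- right; lia.
- left; lia.
Qed.

Lemma head_cat0 (A B : seq nat) : A != [::] -> head 0 (A ++ B) = head 0 A.
Proof. by case: A. Qed.

Lemma last_cat0 (A B : seq nat) : B != [::] -> last 0 (A ++ B) = last 0 B.
Proof. by case: B => // b B _; rewrite last_cat. Qed.

Lemma st_cat_j A B e : last 0 A = head 0 B -> e \in st (A ++ B) -> nself e ->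
  (e \in st A) || (e \in st B).
Proof.
move=> hj /mem_st_cat [-> | -> | ->]; rewrite ?orbT //.
by rewrite hj /nself uedge_self eqxx.
Qed.

Lemma st_cat4 A B C D e : B != [::] -> C != [::] ->
  last 0 A = head 0 B -> last 0 B = head 0 C -> last 0 C = head 0 D ->
  e \in st (A ++ B ++ C ++ D) -> nself e ->
  [|| e \in st A, e \in st B, e \in st C | e \in st D].
Proof.
move=> nB nC j1 j2 j3 h ne.
have j1' : last 0 A = head 0 (B ++ C ++ D) by rewrite head_cat0.
have j2' : last 0 B = head 0 (C ++ D) by rewrite head_cat0.
case/orP: (st_cat_j j1' h ne) => [-> //| h2].
case/orP: (st_cat_j j2' h2 ne) => [-> | h3]; rewrite ?orbT //.
by case/orP: (st_cat_j j3 h3 ne) => ->; rewrite ?orbT.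
Qed.

Lemma no_shared w1 w2 e : head 0 w1 = 1 -> last 0 w1 = 1 -> head 0 w2 = 1 -> last 0 w2 = 1 ->
  count_mem e (st w1) = 1 -> count_mem e (st w2) = 1 -> nself e ->
  exists W, [/\ W != [::], {subset w1 ++ w2 <= W} &
    forall e', e' \in st W -> nself e' -> (e' \in st w1 ++ st w2) && (e' != e)].
Proof.
move=> hh1 hl1 hh2 hl2 c1 c2 ne.
have [x1 [s1 [y1 [t1 [E1 F1]]]]] : exists x s y t, w1 = x :: s ++ y :: t /\ e = uedge (last x s) y.
  by apply: st_split; rewrite -has_pred1 has_count c1.
have [x2 [s2 [y2 [t2 [E2 F2]]]]] : exists x s y t, w2 = x :: s ++ y :: t /\ e = uedge (last x s) y.
  by apply: st_split; rewrite -has_pred1 has_count c2.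
subst w1 w2.
rewrite st_cat -F1 count_cat /= eqxx add1n addnS in c1.
rewrite st_cat -F2 count_cat /= eqxx add1n addnS in c2.
have /eqP := c1; rewrite eqSS addn_eq0 => /andP [/eqP cP1 /eqP cQ1].
have /eqP := c2; rewrite eqSS addn_eq0 => /andP [/eqP cP2 /eqP cQ2].
have nP1 : e \notin st (x1 :: s1) by apply/count_memPn.
have nQ1 : e \notin st (y1 :: t1) by apply/count_memPn.
have nP2 : e \notin st (x2 :: s2) by apply/count_memPn.
have nQ2 : e \notin st (y2 :: t2) by apply/count_memPn.
move: hh1 hh2 hl1 hl2; rewrite /= !last_cat /= => hx1 hx2 hl1 hl2.
have inW1 : forall e', e' \in st (x1 :: s1) ++ st (y1 :: t1) -> e' \in st (x1 :: s1 ++ y1 :: t1) ++ st (x2 :: s2 ++ y2 :: t2).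
  by move=> e'; rewrite !st_cat !mem_cat !in_cons => /orP [->|->]; rewrite ?orbT.
have inW2 : forall e', e' \in st (x2 :: s2) ++ st (y2 :: t2) -> e' \in st (x1 :: s1 ++ y1 :: t1) ++ st (x2 :: s2 ++ y2 :: t2).
  by move=> e'; rewrite !st_cat !mem_cat !in_cons => /orP [->|->]; rewrite ?orbT.
set P1 := x1 :: s1; set Q1 := y1 :: t1; set P2 := x2 :: s2; set Q2 := y2 :: t2.
have ne' : last x1 s1 != y1 by rewrite -uedge_self -F1.
have [[ha hy] | [ha hy]] := uedge_inj (etrans (esym F1) F2).
- exists (P2 ++ rev P1 ++ rev Q2 ++ Q1); split => //.
  + move=> z; rewrite !mem_cat !mem_rev /P1 /Q1 /P2 /Q2 -!cat_cons !mem_cat.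
    by case/orP=> [/orP [->|->] | /orP [->|->]]; rewrite ?orbT.
  + move=> e' he' ne''.
    have j1 : last 0 P2 = head 0 (rev P1) by rewrite head_rev /= ha.
    have j2 : last 0 (rev P1) = head 0 (rev Q2) by rewrite last_rev head_rev /= hx1 hl2.
    have j3 : last 0 (rev Q2) = head 0 Q1 by rewrite last_rev /= hy.
    have nB : rev P1 != [::] by rewrite -size_eq0 size_rev.
    have nC : rev Q2 != [::] by rewrite -size_eq0 size_rev.
    have := st_cat4 nB nC j1 j2 j3 he' ne''.
    rewrite !mem_st_rev.
    case/or4P => h; apply/andP; split.
    * by apply: inW2; rewrite mem_cat h.
    * by apply/eqP => E; move: nP2; rewrite -E h.
    * by apply: inW1; rewrite mem_cat h.
    * by apply/eqP => E; move: nP1; rewrite -E h.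
    * by apply: inW2; rewrite mem_cat h orbT.
    * by apply/eqP => E; move: nQ2; rewrite -E h.
    * by apply: inW1; rewrite mem_cat h orbT.
    * by apply/eqP => E; move: nQ1; rewrite -E h.
- exists (P2 ++ Q1 ++ P1 ++ Q2); split => //.
  + move=> z; rewrite !mem_cat /P1 /Q1 /P2 /Q2 -!cat_cons !mem_cat.
    by case/orP=> [/orP [->|->] | /orP [->|->]]; rewrite ?orbT.
  + move=> e' he' ne''.
    have j1 : last 0 P2 = head 0 Q1 by rewrite /= hy.
    have j2 : last 0 Q1 = head 0 P1 by rewrite /= hl1 hx1.
    have j3 : last 0 P1 = head 0 Q2 by rewrite /= ha.
    have := @st_cat4 P2 Q1 P1 Q2 e' isT isT j1 j2 j3 he' ne''.
    case/or4P => h; apply/andP; split.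
    * by apply: inW2; rewrite mem_cat h.
    * by apply/eqP => E; move: nP2; rewrite -E h.
    * by apply: inW1; rewrite mem_cat h orbT.
    * by apply/eqP => E; move: nQ1; rewrite -E h.
    * by apply: inW1; rewrite mem_cat h.
    * by apply/eqP => E; move: nP1; rewrite -E h.
    * by apply: inW2; rewrite mem_cat h orbT.
    * by apply/eqP => E; move: nQ2; rewrite -E h.
Qed.

Lemma sum_const_nat (T : Type) (r : seq T) (n : nat) : \sum_(i <- r) n = size r * n.
Proof. by elim: r => [|a r IH]; rewrite ?big_nil ?big_cons ?IH ?mulSn. Qed.

Lemma closed_last w : closedw w -> head 0 w = 1 -> last 0 w = 1.
Proof. by case: w => [|x s] //= /eqP <-. Qed.

Lemma mem_count_pos (T : eqType) (x : T) s : x \in s -> 0 < count_mem x s.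
Proof. by rewrite -has_pred1 has_count. Qed.

Lemma word_count w s k : size (st w) = k -> s \in st w -> ~~ nself s -> count_mem s (st w) = 1 ->
  (forall e, e \in st w -> ~~ nself e -> e = s) ->
  (forall e, e \in st w -> nself e -> count_mem e (st w) = 2) -> w != [::] ->
  (size (undup w)).*2 <= k.+1.
Proof.
move=> hs hsin hsn hc1 hself h2 nw.
set F := [seq e <- st w | nself e].
have hF : size F = k.-1.
  have := count_predC nself (st w).
  have -> : count (predC nself) (st w) = 1.
    rewrite -hc1; apply: eq_in_count => e he /=.
    apply/idP/eqP => [hn|->]; first exact: hself.
    exact: hsn.
  by rewrite hs size_filter => <-; rewrite addn1.
have hsum : \sum_(e <- undup F) count_mem e F = size F.
  by apply: sum_count; [exact: undup_uniq | move=> e; rewrite mem_undup].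
have : \sum_(e <- undup F) count_mem e F = \sum_(e <- undup F) 2.
  apply: eq_big_seq => e; rewrite mem_undup mem_filter => /andP [ne ein].
  rewrite count_filter -(h2 e ein ne); apply: eq_count => x /=.
  by apply/andP/idP => [[]//|/eqP ->]; split.
rewrite hsum sum_const_nat hF => hF2.
have := keycount nw; rewrite -/F.
move: hF2; case: k hs hF => [|k'] hs hF /=.
  by move/eqP: hs; rewrite size_eq0 => /eqP hst; rewrite hst in hsin.
rewrite -muln2; lia.
Qed.

Lemma arith1 k a b c : k + a = b + c -> b.*2 <= k.+1 -> c.*2 <= k.+1 -> a <= 1.
Proof. rewrite -!muln2; lia. Qed.
Lemma arith2 k a b c : k + a = b + c -> b.*2 <= k.+1 -> c.*2 <= k.+1 -> 0 < a ->
  b.*2 = k.+1 /\ c.*2 = k.+1.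
Proof. rewrite -!muln2; lia. Qed.

Lemma supp_lemma (w1 w2 : seq nat) k : (size (undup w1)).*2 <= k.+1 ->
  (size (undup w2)).*2 <= k.+1 -> size (undup (w1 ++ w2)) = k -> 1 \in w1 -> 1 \in w2 ->
  [/\ (forall x, (x \in w1) && (x \in w2) = (x == 1)),
      (size (undup w1)).*2 = k.+1 & (size (undup w2)).*2 = k.+1].
Proof.
move=> h1 h2 hk i1 i2.
rewrite -hk in h1 h2 *.
have hsz : size (undup (w1 ++ w2)) + count (mem w2) (undup w1) = size (undup w1) + size (undup w2).
  rewrite undup_cat size_cat size_filter.
  have : count (fun x => x \notin w2) (undup w1) + count (mem w2) (undup w1) = size (undup w1).
    by rewrite addnC -(count_predC (mem w2)); congr (_ + _); apply: eq_count.
  lia.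
have c1 : 0 < count (mem w2) (undup w1) by rewrite -has_count; apply/hasP; exists 1; rewrite ?mem_undup.
split.
- move=> x; apply/idP/eqP => [/andP [xa xb]|->]; last by rewrite i1 i2.
  case: (eqVneq x 1) => // nx; exfalso.
  have : size [:: x; 1] <= count (mem w2) (undup w1).
    rewrite -size_filter; apply: uniq_leq_size; first by rewrite /= inE nx.
    move=> z; rewrite !in_cons orbF mem_filter mem_undup => /orP [/eqP -> | /eqP ->].
      by apply/andP; split.
    by apply/andP; split.
  by rewrite /= ltnNge (arith1 hsz h1 h2).
- exact: (arith2 hsz h1 h2 c1).1.
- exact: (arith2 hsz h1 h2 c1).2.
Qed.

Lemma ar3 a b k : b.+2 <= a -> a <= k -> k <= b.+1 -> False.
Proof. lia. Qed.
Lemma ar4 a : 2 <= a -> a - 2 = 0 -> a = 2.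
Proof. lia. Qed.
Lemma ar5 a k : a + k * 2 = k + k -> a = 0.
Proof. lia. Qed.
Lemma ar6 a b k : a <= k -> k <= b.+1 -> b.+1 <= a -> a = k /\ b = k.-1.
Proof. lia. Qed.
Lemma ar7 k c b : k <= c.+1 -> c.+1 <= b -> b = k.-1 -> False.
Proof. lia. Qed.
Lemma ar_split a b : a + b = 2 -> 0 < a -> 0 < b -> a = 1 /\ b = 1.
Proof. lia. Qed.

Lemma structA k w1 w2 : good_pair k (w1, w2) ->
  let L := st w1 ++ st w2 in
  [/\ (forall e, e \in L -> count_mem e L = 2),
      exists2 s, (s \in st w1) && (s \in st w2) & (~~ nself s /\ forall e, e \in L -> ~~ nself e -> e = s),
      (forall e, nself e -> e \in st w1 -> e \in st w2 -> False),
      size (st w1) = k & size (st w2) = k].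
Proof.
move=> /and4P [/andP [hall hhas] hV1 hV2 /eqP hwt] L.
move: hV1 => /= /and5P [_ /eqP hs1 hc1 /eqP hh1 hself1].
move: hV2 => /= /and5P [_ /eqP hs2 hc2 /eqP hh2 hself2].
rewrite /= /Ncount !stepsE in hall hhas.
rewrite stepsE in hself1; rewrite stepsE in hself2.
rewrite /wtp /= in hwt.
have hl1 := closed_last hc1 hh1.
have hl2 := closed_last hc2 hh2.
have nw1 : w1 != [::] by rewrite -size_eq0 hs1.
have nw2 : w2 != [::] by rewrite -size_eq0 hs2.
have ss1 : size (st w1) = k by rewrite size_st hs1.
have ss2 : size (st w2) = k by rewrite size_st hs2.
set E := undup L.
set En := undup [seq e <- L | nself e].
have sumE : \sum_(e <- E) count_mem e L = k + k.
  rewrite sum_count ?undup_uniq ?size_cat ?ss1 ?ss2 //.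
  by move=> e; rewrite mem_undup.
have hge2 : forall e, e \in L -> 2 <= count_mem e L.
  by move=> e he; move/allP: hall => /(_ e he); rewrite /L count_cat.
have sizeE : size E <= k.
  have : \sum_(e <- E) 2 <= \sum_(e <- E) count_mem e L.
    by rewrite big_seq [X in _ <= X]big_seq; apply: leq_sum => e; rewrite mem_undup => he; apply: hge2.
  by rewrite sumE sum_const_nat; lia.
have kc : k <= (size En).+1.
  rewrite -hwt; apply: keycount_sub; first by case: (w1) nw1.
  move=> e; rewrite !mem_filter => /andP [ne he]; rewrite ne /=.
  have hj : last 0 w1 = head 0 w2 by rewrite hl1 hh2.
  by rewrite mem_cat; apply: st_cat_j hj he ne.
case/hasP: hself1 => s1 s1in s1self.
case/hasP: hself2 => s2 s2in s2self.
have s1L : s1 \in L by rewrite mem_cat s1in.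
have s2L : s2 \in L by rewrite mem_cat s2in orbT.
have s1n : s1 \notin En by rewrite mem_undup mem_filter /nself s1self.
have s2n : s2 \notin En by rewrite mem_undup mem_filter /nself s2self.
have EnE : {subset En <= E} by move=> e; rewrite !mem_undup mem_filter => /andP [].
have es : s2 = s1.
  apply/eqP; apply: contraT => hne.
  have : size (s1 :: s2 :: En) <= size E.
    apply: uniq_leq_size; first by rewrite /= in_cons negb_or eq_sym hne s1n s2n undup_uniq.
    by move=> e; rewrite !in_cons => /orP [/eqP -> | /orP [/eqP -> | /EnE //]]; rewrite mem_undup.
  by rewrite /= => h; exfalso; exact: (ar3 h sizeE kc).
subst s2.
have hsz : size (s1 :: En) <= size E.
  apply: uniq_leq_size; first by rewrite /= s1n undup_uniq.
  by move=> e; rewrite !in_cons => /orP [/eqP -> | /EnE //]; rewrite mem_undup.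
have hkE : size E = k /\ size En = k.-1.
  by apply: ar6 sizeE kc hsz.
have hsub : {subset s1 :: En <= E}.
  by move=> e; rewrite !in_cons => /orP [/eqP -> | /EnE //]; rewrite mem_undup.
have huq : uniq (s1 :: En) by rewrite /= s1n undup_uniq.
have [_ hEq] := uniq_min_size huq hsub ltac:(rewrite /=; case: hkE => -> ->; exact: leqSpred).
have selfE : forall e, e \in L -> ~~ nself e -> e = s1.
  move=> e he hn; have : e \in E by rewrite mem_undup.
  rewrite -hEq in_cons => /orP [/eqP // |]; by rewrite mem_undup mem_filter (negbTE hn).
have count2 : forall e, e \in L -> count_mem e L = 2.
  have hsum0 : \sum_(e <- E) (count_mem e L - 2) = 0.
    have : \sum_(e <- E) ((count_mem e L - 2) + 2) = k + k.
      rewrite -sumE; apply: eq_big_seq => e; rewrite mem_undup => he; rewrite subnK //; exact: hge2.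
    rewrite big_split /= sum_const_nat (proj1 hkE).
    exact: ar5.
  move/eqP: hsum0; rewrite sum_nat_seq_eq0 => /allP h e he.
  have := h e; rewrite mem_undup => /(_ he) /= /eqP.
  exact: ar4 (hge2 e he).
have noshare : forall e, nself e -> e \in st w1 -> e \in st w2 -> False.
  move=> e ne h1 h2.
  have eL : e \in L by rewrite mem_cat h1.
  have c12 := count2 e eL; rewrite count_cat in c12.
  have p1 := mem_count_pos h1; have p2 := mem_count_pos h2.
  have [c1 c2] := ar_split c12 p1 p2.
  have [W [nW subW hW]] := no_shared hh1 hl1 hh2 hl2 c1 c2 ne.
  set F' := [seq e' <- L | nself e' && (e' != e)].
  have k1 : k <= (size (undup F')).+1.
    rewrite -hwt; apply: leq_trans (size_undup_sub subW) _; apply: keycount_sub nW _.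
    move=> e'; rewrite mem_filter => /andP [ne' he']; rewrite mem_filter ne' /=.
    by case/andP: (hW e' he' ne') => -> ->.
  have k2 : size (e :: undup F') <= size En.
    apply: uniq_leq_size.
      by rewrite /= undup_uniq andbT mem_undup mem_filter eqxx andbF.
    move=> e'; rewrite in_cons => /orP [/eqP -> | ]; first by rewrite mem_undup mem_filter ne eL.
    by rewrite !mem_undup !mem_filter => /andP [/andP [-> _] ->].
  exact: ar7 k1 k2 (proj2 hkE).
split => //.
by exists s1; [rewrite s1in | split; [rewrite /nself s1self |]].
Qed.

Lemma undup_size_eqi (s t : seq nat) : s =i t -> size (undup s) = size (undup t).
Proof.
move=> h; apply/eqP; rewrite eqn_leq !size_undup_sub // => x; by rewrite h.
Qed.

Lemma size_nself w s : s \in st w -> ~~ nself s -> count_mem s (st w) = 1 ->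
  (forall e, e \in st w -> ~~ nself e -> e = s) ->
  size [seq e <- st w | nself e] = (size (st w)).-1.
Proof.
move=> hsin hsn hc1 hself.
have := count_predC nself (st w).
have -> : count (predC nself) (st w) = 1.
  rewrite -hc1; apply: eq_in_count => e he /=.
  apply/idP/eqP => [hn|->]; first exact: hself.
  exact: hsn.
by rewrite size_filter => <-; rewrite addn1.
Qed.

Lemma word_final w k : size w = k.+1 -> closedw w -> head 0 w = 1 ->
  count_mem (1,1) (st w) = 1 -> (forall e, e \in st w -> ~~ nself e -> e = (1,1)) ->
  (forall e, e \in st w -> nself e -> count_mem e (st w) = 2) ->
  (size (undup w)).*2 = k.+1 ->
  (Ncount (1,1) w == 1) && wigner (checkw w) && (size (checkw w) == k).
Proof.
move=> hs hc hh hc1 hself h2 hv.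
have hin : (1,1) \in st w by rewrite -has_pred1 has_count hc1.
have hsz := size_nself hin isT hc1 hself.
rewrite size_st hs /= in hsz.
case: w hs hc hh hc1 hself h2 hv hin hsz => [|x s] // hs hc hh hc1 hself h2 hv hin hsz.
have hst := st_check_aux x s.
rewrite NcountE hc1 eqxx /=.
have hsize : size (x :: check_aux x s) = k.
  have := size_st (x :: check_aux x s); rewrite hst hsz /= => h.
  case: (k) hs hsz h => [|k'] hs' hsz' h; last by rewrite /= -h.
  by case: (s) hs' hin => // _; rewrite /st.
rewrite -[(size (check_aux x s)).+1]/(size (x :: check_aux x s)) hsize eqxx andbT /wigner /closedw.
apply/and3P; split.
- by rewrite last_check_aux.
- apply/allP => e he.
  rewrite stepsE hst in he; rewrite NcountE hst.
  move: he; rewrite mem_filter => /andP [ne he].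
  rewrite count_filter (eq_count (a2 := pred1 e)) ?h2 // => y /=.
  by apply/andP/idP => [[]//|/eqP ->]; split.
- rewrite /wtw hsize -hv; apply/eqP; congr (_.*2); apply: undup_size_eqi => z.
  exact: mem_check_aux.
Qed.

Lemma partI k w1 w2 : good_pair k (w1, w2) ->
  [/\ (forall w, w \in [:: w1; w2] ->
         (Ncount (1, 1) w == 1) && wigner (checkw w) && (size (checkw w) == k)),
      (forall x, (x \in w1) && (x \in w2) = (x == 1)),
      (forall e, e \in st w1 ++ st w2 -> count_mem e (st w1 ++ st w2) = 2),
      (forall e, e \in st w1 ++ st w2 -> ~~ nself e -> e = (1,1)) &
      (count_mem (1,1) (st w1) = 1 /\ count_mem (1,1) (st w2) = 1)].
Proof.
move=> hg.
have [count2 [s hs [hsn selfE]] noshare ss1 ss2] := structA hg.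
move: hg => /and4P [_ hV1 hV2 /eqP hwt].
move: hV1 => /= /and5P [_ /eqP hs1 hc1 /eqP hh1 _].
move: hV2 => /= /and5P [_ /eqP hs2 hc2 /eqP hh2 _].
rewrite /wtp /= in hwt.
case/andP: hs => s1in s2in.
have sL : s \in st w1 ++ st w2 by rewrite mem_cat s1in.
have hc := count2 s sL; rewrite count_cat in hc.
have p1 := mem_count_pos s1in; have p2 := mem_count_pos s2in.
have [c1 c2] := ar_split hc p1 p2.
have self1 : forall e, e \in st w1 -> ~~ nself e -> e = s.
  by move=> e he; apply: selfE; rewrite mem_cat he.
have self2 : forall e, e \in st w2 -> ~~ nself e -> e = s.
  by move=> e he; apply: selfE; rewrite mem_cat he orbT.
have two1 : forall e, e \in st w1 -> nself e -> count_mem e (st w1) = 2.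
  move=> e he ne; have := count2 e; rewrite mem_cat he count_cat => /(_ isT).
  have -> : count_mem e (st w2) = 0.
    by apply/count_memPn/negP => h; exact: (noshare e ne he h).
  by rewrite addn0.
have two2 : forall e, e \in st w2 -> nself e -> count_mem e (st w2) = 2.
  move=> e he ne; have := count2 e; rewrite mem_cat he orbT count_cat => /(_ isT).
  have -> : count_mem e (st w1) = 0.
    by apply/count_memPn/negP => h; exact: (noshare e ne h he).
  by [].
have nw1 : w1 != [::] by rewrite -size_eq0 hs1.
have nw2 : w2 != [::] by rewrite -size_eq0 hs2.
have v1 := word_count ss1 s1in hsn c1 self1 two1 nw1.
have v2 := word_count ss2 s2in hsn c2 self2 two2 nw2.
have i1 : 1 \in w1 by case: (w1) hh1 nw1 => //= a l ->; rewrite mem_head.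
have i2 : 1 \in w2 by case: (w2) hh2 nw2 => //= a l ->; rewrite mem_head.
have [hsupp hv1 hv2] := supp_lemma v1 v2 hwt i1 i2.
have es : s = (1,1).
  have := st_mem s1in; have := st_mem s2in.
  case: s {sL hc p1 p2 c1 c2 self1 self2 s1in s2in selfE} hsn => a b /=.
  rewrite /nself /= negbK => /eqP <- /andP [_ h2] /andP [h1 _].
  by have := hsupp a; rewrite h1 h2 => /esym /eqP ->.
subst s.
split => //.
- move=> w; rewrite !in_cons orbF => /orP [/eqP -> | /eqP ->].
  + exact: word_final hs1 hc1 hh1 c1 self1 two1 hv1.
  + exact: word_final hs2 hc2 hh2 c2 self2 two2 hv2.
Qed.

Import Order.TTheory GRing.Theory Num.Theory.

Lemma partIII (R : comNzRingType) (md mo : nat -> R) k w1 w2 :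
  md 1%N = 0%R -> mo 2%N = 1%R -> good_pair k (w1, w2) -> Ecov md mo w1 w2 = md 2%N.
Proof.
move=> hmd1 hmo2 hg.
have [_ _ c2 selfE [c11 _]] := partI hg.
have hin : (1,1) \in st w1 by rewrite -has_pred1 has_count c11.
have hinL : (1,1) \in st w1 ++ st w2 by rewrite mem_cat hin.
have E2 : (\prod_(e <- undup (st w1 ++ st w2)) emom md mo e (count_mem e (st w1) + count_mem e (st w2)))%R = md 2%N.
  rewrite (bigD1_seq (1,1)) ?undup_uniq ?mem_undup //=.
  rewrite -count_cat c2 // /emom /= big1_seq ?mulr1 //.
  move=> e /andP [ne]; rewrite mem_undup => he.
  rewrite -count_cat c2 // /emom.
  case: ifP => // hs; exfalso; move/negP: ne; apply; apply/eqP; apply: selfE => //.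
  by rewrite /nself hs.
have E1 : (\prod_(e <- undup (st w1)) emom md mo e (count_mem e (st w1)))%R = 0%R.
  by rewrite (bigD1_seq (1,1)) ?undup_uniq ?mem_undup //= c11 /emom /= hmd1 mul0r.
rewrite /Ecov /ET2 /ET /Ncount /edgesw !stepsE E2 E1 mul0r subr0 //.
Qed.

Definition finv (s : seq nat) (f : nat -> nat) (y : nat) := nth 0 s (index y (map f s)).

Lemma finv_core s f : {in s &, injective f} ->
  {in s, cancel f (finv s f)} /\ {in map f s &, injective (finv s f)}.
Proof.
move=> inj; have K : {in s, cancel f (finv s f)} by move=> x xs; rewrite /finv nth_index_map.
split => // y1 y2 /mapP [x1 x1s ->] /mapP [x2 x2s ->].
by rewrite !K // => ->.
Qed.

Lemma map_finv s t f : {in s &, injective f} -> {subset t <= s} -> map (finv s f) (map f t) = t.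
Proof.
move=> inj sub; have [K _] := finv_core inj.
rewrite -map_comp; rewrite -[RHS]map_id; apply/eq_in_map => x xt /=; exact: K (sub x xt).
Qed.

Lemma ew_sym w w' : equiv_word w w' -> equiv_word w' w.
Proof.
move=> [f [inj <-]]; have [K inj'] := finv_core inj.
by exists (finv w f); split => //; apply: map_finv.
Qed.

Lemma ew_trans w1 w2 w3 : equiv_word w1 w2 -> equiv_word w2 w3 -> equiv_word w1 w3.
Proof.
move=> [f [inj <-]] [g [inj2 <-]].
exists (g \o f); split; last by rewrite map_comp.
move=> x y xs ys /= h; apply: inj => //; apply: inj2 => //; exact: map_f.
Qed.

Lemma ep_sym a b : equiv_pair a b -> equiv_pair b a.
Proof.
case: a b => [a1 a2] [b1 b2] [f [inj [/= <- <-]]]; have [K inj'] := finv_core inj.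
exists (finv (a1 ++ a2) f); split; first by rewrite /= -map_cat.
by split; apply: map_finv => // x xs; rewrite mem_cat xs ?orbT.
Qed.

Lemma ep_trans a b c : equiv_pair a b -> equiv_pair b c -> equiv_pair a c.
Proof.
case: a b c => [a1 a2] [b1 b2] [c1 c2] [f [inj [E1 E2]]] [g [inj2 [E3 E4]]].
move: E1 E2 E3 E4 => /= E1 E2 E3 E4; subst c1 c2 b1 b2.
exists (g \o f); split; last by rewrite /= !(map_comp g f).
move=> x y xs ys /= h; apply: inj => //; apply: inj2 => //=;
by rewrite -map_cat map_f.
Qed.

Lemma ep_word a b : equiv_pair a b -> equiv_word a.1 b.1 /\ equiv_word a.2 b.2.
Proof.
case: a b => [a1 a2] [b1 b2] [f [inj [/= E1 E2]]]; split; exists f; split => //;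
by move=> x y xs ys; apply: inj; rewrite mem_cat ?xs ?ys ?orbT.
Qed.

Lemma head_equiv w w' f : {in w &, injective f} -> map f w = w' -> head 0 w = 1 -> head 0 w' = 1 ->
  w != [::] -> f 1 = 1.
Proof. by case: w => [|x s] //= _ <- /= -> . Qed.

Lemma ep_combine w1 w2 w1' w2' :
  (forall x, (x \in w1) && (x \in w2) = (x == 1)) ->
  (forall x, (x \in w1') && (x \in w2') = (x == 1)) ->
  head 0 w1 = 1 -> head 0 w2 = 1 -> head 0 w1' = 1 -> head 0 w2' = 1 ->
  w1 != [::] -> w2 != [::] ->
  equiv_word w1 w1' -> equiv_word w2 w2' -> equiv_pair (w1, w2) (w1', w2').
Proof.
move=> s1 s2 h1 h2 h1' h2' n1 n2 [f1 [inj1 E1]] [f2 [inj2 E2]].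
have f11 := head_equiv inj1 E1 h1 h1' n1.
have f21 := head_equiv inj2 E2 h2 h2' n2.
have i1 : 1 \in w1 by case: (w1) h1 n1 => //= a l ->; rewrite mem_head.
have i2 : 1 \in w2 by case: (w2) h2 n2 => //= a l ->; rewrite mem_head.
exists (fun x => if x \in w1 then f1 x else f2 x); split; last split => /=.
- have key : forall x y, x \in w1 -> y \in w2 -> y \notin w1 -> f1 x <> f2 y.
    move=> x y xa yb ya hxy.
    have : (f1 x \in w1') && (f1 x \in w2') by rewrite -E1 map_f //= hxy -E2 map_f.
    rewrite s2 hxy => /eqP; rewrite -f21 => /inj2 => /(_ yb i2) ey.
    by move: ya; rewrite ey i1.
  move=> x y; rewrite !mem_cat => /orP hx /orP hy.
  case xa: (x \in w1); case ya: (y \in w1) => h.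
  + exact: inj1.
  + have yb : y \in w2 by case: hy => //; rewrite ya.
    by exfalso; apply: (key x y xa yb); rewrite ?ya.
  + have xb : x \in w2 by case: hx => //; rewrite xa.
    by exfalso; apply: (key y x ya xb); rewrite ?xa.
  + have xb : x \in w2 by case: hx => //; rewrite xa.
    have yb : y \in w2 by case: hy => //; rewrite ya.
    exact: inj2.
- by rewrite -E1; apply/eq_in_map => x ->.
- rewrite -E2; apply/eq_in_map => x xb; case: ifP => // xa.
  have : (x \in w1) && (x \in w2) by rewrite xa xb.
  by rewrite s1 => /eqP ->; rewrite f11 f21.
Qed.

Lemma count_filter_nself e (l : seq (nat * nat)) : nself e ->
  count_mem e [seq x <- l | nself x] = count_mem e l.
Proof.
move=> ne; rewrite count_filter; apply: eq_count => y /=.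
by apply/andP/idP => [[]//|/eqP ->]; split.
Qed.

Lemma ar8 a b k : a + b = k -> a = k.-1 -> 0 < k -> b = 1.
Proof. lia. Qed.

Lemma ak_facts k u : ak_word k u ->
  [/\ [/\ u != [::], head 0 u = 1, closedw u, size u = k.+1 & is_word u],
      count_mem (1,1) (st u) = 1,
      (forall e, e \in st u -> ~~ nself e -> e = (1,1)),
      (forall e, e \in st u -> nself e -> 2 <= count_mem e (st u)) &
      (size (undup u)).*2 = k.+1].
Proof.
case/andP => hw /andP [/eqP hs /andP [hc /andP [/eqP hh /andP [hN /andP [hwig /eqP hsc]]]]].
case: u hw hs hc hh hN hwig hsc => [|x s] // hw hs hc hh hN hwig hsc.
have hst : st (checkw (x :: s)) = [seq e <- st (x :: s) | nself e] by apply: st_check_aux.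
rewrite NcountE in hN; move/eqP: hN => hN.
have kpos : 0 < k by rewrite -hsc.
have hsf : size [seq e <- st (x :: s) | nself e] = k.-1 by rewrite -hst size_st hsc.
have hsst : size (st (x :: s)) = k by rewrite size_st hs.
have c1 : count (predC nself) (st (x :: s)) = 1.
  have := count_predC nself (st (x :: s)); rewrite -size_filter hsf hsst => h.
  exact: ar8 h (erefl _) kpos.
move/and3P: hwig => [_ hall /eqP hwt].
split => //.
- move=> e he hse; apply/eqP; apply: contraT => hne.
  have := count_predUI (pred1 e) (pred1 (1,1)) (st (x :: s)).
  have -> : count (predI (pred1 e) (pred1 (1,1))) (st (x :: s)) = 0.
    rewrite (eq_count (a2 := pred0)) ?count_pred0 // => y /=.
    by apply/andP => -[/eqP -> /eqP h]; move: hne; rewrite h eqxx.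
  have : count (predU (pred1 e) (pred1 (1,1))) (st (x :: s)) <= count (predC nself) (st (x :: s)).
    apply: sub_count => y /= /orP [/eqP -> | /eqP ->] //.
  rewrite c1 hN addn0 => h1 h2.
  have := mem_count_pos he; move: h1 h2; move: (count_mem e _) (count _ _) => a b; lia.
- move=> e he ne.
  have he' : e \in st (checkw (x :: s)) by rewrite hst mem_filter ne.
  move/allP: hall => /(_ e); rewrite stepsE => /(_ he').
  by rewrite NcountE hst count_filter_nself.
- move: hwt; rewrite hsc /wtw => <-; congr (_.*2); apply: undup_size_eqi => z.
  by rewrite /checkw mem_check_aux.
Qed.

Definition gsh (u1 : seq nat) (x : nat) : nat := if x == 1 then 1 else x + (sumn u1).+2.
Definition sh u1 u2 := map (gsh u1) u2.

Lemma gsh_inj u1 : injective (gsh u1).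
Proof.
move=> x y; rewrite /gsh; case: eqP => hx; case: eqP => hy; lia.
Qed.

Lemma gsh1 u1 : gsh u1 1 = 1.
Proof. by []. Qed.

Lemma le_sumn x s : x \in s -> x <= sumn s.
Proof.
elim: s => [|a s IH] //; rewrite in_cons /= => /orP [/eqP ->|/IH]; lia.
Qed.

Lemma gsh_notin u1 x : x != 1 -> gsh u1 x \notin u1.
Proof.
rewrite /gsh => /negbTE ->; apply/negP => /le_sumn; lia.
Qed.

Definition Gm (g : nat -> nat) (e : nat * nat) := uedge (g e.1) (g e.2).

Lemma Gm_uedge g x y : Gm g (uedge x y) = uedge (g x) (g y).
Proof.
rewrite /Gm [uedge x y]/uedge /=; case: (leqP x y) => h //; exact: uedgeC.
Qed.

Lemma st_map g s : st (map g s) = map (Gm g) (st s).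
Proof.
elim: s => [|x [|y s] IH] //.
by rewrite map_cons map_cons stE2 -map_cons IH stE2 map_cons Gm_uedge.
Qed.

Lemma st_norm e s : e \in st s -> e.1 <= e.2.
Proof.
elim: s => [|x [|y s] IH] //; rewrite stE2 in_cons => /orP [/eqP -> | /IH //].
by rewrite /uedge /=; lia.
Qed.

Lemma Gm_inj g e e' : injective g -> e.1 <= e.2 -> e'.1 <= e'.2 -> Gm g e = Gm g e' -> e = e'.
Proof.
case: e e' => [a b] [c d] /= ig h1 h2.
rewrite /Gm /= => /uedge_inj [[/ig -> /ig ->] | [/ig h3 /ig h4]] //.
by subst; have -> : c = d by lia.
Qed.

Lemma count_st_map g s e : injective g -> e \in st s ->
  count_mem (Gm g e) (st (map g s)) = count_mem e (st s).
Proof.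
move=> ig he; rewrite st_map count_map; apply: eq_in_count => e' he' /=.
apply/eqP/eqP => [h|->] //; apply: Gm_inj ig (st_norm he') (st_norm he) h.
Qed.

Lemma Gm11 g : g 1 = 1 -> Gm g (1,1) = (1,1).
Proof. by rewrite /Gm /= => ->. Qed.

Lemma undup_cat_size (w1 w2 : seq nat) :
  size (undup (w1 ++ w2)) + count (mem w2) (undup w1) = size (undup w1) + size (undup w2).
Proof.
rewrite undup_cat size_cat size_filter.
have : count (fun x => x \notin w2) (undup w1) + count (mem w2) (undup w1) = size (undup w1).
  by rewrite addnC -(count_predC (mem w2)); congr (_ + _); apply: eq_count.
lia.
Qed.

Lemma ar9 a b c k : a + 1 = b + c -> b.*2 = k.+1 -> c.*2 = k.+1 -> a = k.
Proof. rewrite -!muln2; lia. Qed.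

Lemma head_in (u : seq nat) : u != [::] -> head 0 u = 1 -> 1 \in u.
Proof. by case: u => //= a l _ ->; rewrite mem_head. Qed.

Lemma good_of_ak k u1 u2 : ak_word k u1 -> ak_word k u2 -> good_pair k (u1, sh u1 u2).
Proof.
move=> a1 a2.
have [[n1 h1 c1 s1 w1] c11 self1 two1 v1] := ak_facts a1.
have [[n2 h2 c2 s2 w2] c21 self2 two2 v2] := ak_facts a2.
have ig := @gsh_inj u1.
have g1 : gsh u1 1 = 1 by [].
have in21 : (1,1) \in st u2 by rewrite -has_pred1 has_count c21.
have in11 : (1,1) \in st u1 by rewrite -has_pred1 has_count c11.
have cv : forall e, e \in st u2 -> count_mem (Gm (gsh u1) e) (st (sh u1 u2)) = count_mem e (st u2).
  by move=> e he; apply: count_st_map.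
have in11v : (1,1) \in st (sh u1 u2).
  by rewrite /sh st_map -{1}(Gm11 g1); apply: map_f.
have cv11 : count_mem (1,1) (st (sh u1 u2)) = 1 by rewrite -{1}(Gm11 g1) cv.
have memv : forall e, e \in st (sh u1 u2) -> exists2 e', e' \in st u2 & e = Gm (gsh u1) e'.
  by move=> e; rewrite /sh st_map => /mapP.
apply/and4P; split.
- rewrite /weak_CLT_pair /= /Ncount !stepsE; apply/andP; split.
  + apply/allP => e; rewrite mem_cat => /orP [he|he].
    * case: (boolP (nself e)) => ne.
        by apply: leq_trans (two1 e he ne) (leq_addr _ _).
      by rewrite (self1 e he ne) c11 cv11.
    * have [e' he' ->] := memv e he; rewrite cv //.
      case: (boolP (nself e')) => ne.
        by apply: leq_trans (two2 e' he' ne) (leq_addl _ _).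
      by rewrite (self2 e' he' ne) Gm11 // c11 c21.
  + by apply/hasP; exists (1,1).
- rewrite /in_V /= w1 s1 eqxx c1 h1 eqxx /= stepsE; apply/hasP; exists (1,1) => //.
- rewrite /in_V /= /sh size_map s2 eqxx stepsE.
  apply/and5P; split.
  + apply/allP => x /mapP [y _ ->]; rewrite /gsh; case: ifP => //; lia.
  + by [].
  + case: (u2) c2 n2 => [|x s] //= /eqP hc _; rewrite last_map -hc; exact: eqxx.
  + by case: (u2) h2 n2 => [|x s] //= -> _.
  + by apply/hasP; exists (1,1).
- apply/eqP; rewrite /wtp /=.
  have hc : count (mem (sh u1 u2)) (undup u1) = 1.
    have i1 := head_in n1 h1.
    transitivity (count_mem 1 (undup u1)); last first.
      by rewrite (count_uniq_mem 1 (undup_uniq u1)) mem_undup i1.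
    apply: eq_in_count => x; rewrite mem_undup => xu /=.
    apply/idP/eqP => [/mapP [y _ xE] | ->].
      subst x; case: (eqVneq y 1) => [->|ny] //.
      by move: xu; rewrite (negbTE (gsh_notin u1 ny)).
    exact: (map_f (gsh u1) (head_in n2 h2)).
  have := undup_cat_size u1 (sh u1 u2).
  rewrite hc /sh (undup_map_inj ig) size_map => h.
  exact: ar9 h v1 v2.
Qed.

Lemma pair_facts k w1 w2 : good_pair k (w1, w2) ->
  [/\ ak_word k w1, ak_word k w2, (forall x, (x \in w1) && (x \in w2) = (x == 1)),
      head 0 w1 = 1 /\ head 0 w2 = 1 & w1 != [::] /\ w2 != [::]].
Proof.
move=> hg; have [hw hsupp _ _ _] := partI hg.
move: (hg) => /and4P [_ /= hV1 hV2 _].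
have := hw w1 (mem_head _ _); have := hw w2 ltac:(by rewrite !inE eqxx orbT).
move: hV1 hV2 => /and5P [a1 /eqP b1 c1 /eqP d1 _] /and5P [a2 /eqP b2 c2 /eqP d2 _].
move=> /andP [/andP [e2 f2] g2] /andP [/andP [e1 f1] g1].
split => //.
- by rewrite /ak_word a1 b1 c1 d1 e1 f1 g1 eqxx.
- by rewrite /ak_word a2 b2 c2 d2 e2 f2 g2 eqxx.
- by split; rewrite -size_eq0 ?b1 ?b2.
Qed.

Lemma partIV k S A : reps (good_pair k) equiv_pair S -> reps (ak_word k) equiv_word A ->
  size S = (size A ^ 2)%N.
Proof.
move=> [uS allS uniqS exS] [uA allA uniqA exA].
have [rA HrA] : exists rA : seq nat -> seq nat,
    forall w, ak_word k w -> rA w \in A /\ equiv_word w (rA w).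
  exists (fun w => epsilon (inhabits [::]) (fun b => ak_word k w -> b \in A /\ equiv_word w b)).
  move=> w hw; apply: (epsilon_spec (inhabits [::]) (fun b => ak_word k w -> b \in A /\ equiv_word w b)) => //.
  by have [b bA eb] := exA w hw; exists b.
have [rS HrS] : exists rS : seq nat * seq nat -> seq nat * seq nat,
    forall a, good_pair k a -> rS a \in S /\ equiv_pair a (rS a).
  exists (fun a => epsilon (inhabits ([::], [::])) (fun b => good_pair k a -> b \in S /\ equiv_pair a b)).
  move=> a ha; apply: (epsilon_spec (inhabits ([::], [::])) (fun b => good_pair k a -> b \in S /\ equiv_pair a b)) => //.
  by have [b bS eb] := exS a ha; exists b.
set AA := [seq (x, y) | x <- A, y <- A].
have sAA : size AA = (size A ^ 2)%N by rewrite size_allpairs mulnn.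
have uAA : uniq AA.
  by apply: allpairs_uniq => // -[a b] [c d] _ _ /= [-> ->].
have memAA : forall p, p \in AA -> p.1 \in A /\ p.2 \in A.
  by move=> p /allpairsP [[x y] [/= xA yA ->]].
apply/eqP; rewrite eqn_leq; apply/andP; split.
- rewrite -sAA; set phi := fun a : seq nat * seq nat => (rA a.1, rA a.2).
  rewrite -(size_map phi); apply: uniq_leq_size.
  + rewrite map_inj_in_uniq //.
    move=> [a1 a2] [b1 b2] aS bS /= [E1 E2].
    have [aka1 aka2 sa [ha1 ha2] [na1 na2]] := pair_facts (allP allS _ aS).
    have [akb1 akb2 sb [hb1 hb2] [nb1 nb2]] := pair_facts (allP allS _ bS).
    apply: uniqS => //; apply: ep_combine => //.
      by apply: ew_trans (proj2 (HrA _ aka1)) _; rewrite E1; apply: ew_sym (proj2 (HrA _ akb1)).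
    by apply: ew_trans (proj2 (HrA _ aka2)) _; rewrite E2; apply: ew_sym (proj2 (HrA _ akb2)).
  + move=> p /mapP [[a1 a2] aS ->] /=.
    have [aka1 aka2 _ _ _] := pair_facts (allP allS _ aS).
    by apply: allpairs_f; [exact: (proj1 (HrA _ aka1)) | exact: (proj1 (HrA _ aka2))].
- rewrite -sAA; set psi := fun p : seq nat * seq nat => rS (p.1, sh p.1 p.2).
  have gp : forall p, p \in AA -> good_pair k (p.1, sh p.1 p.2).
    by move=> p /memAA [h1 h2]; apply: good_of_ak; apply: (allP allA).
  rewrite -(size_map psi); apply: uniq_leq_size.
  + rewrite map_inj_in_uniq //.
    move=> [u1 u2] [u1' u2'] pA qA /= E.
    have [_ e1] := HrS _ (gp _ pA); have [_ e2] := HrS _ (gp _ qA).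
    have E' : rS (u1, sh u1 u2) = rS (u1', sh u1' u2') := E.
    move: e1 e2 => /= e1 /ep_sym e2; rewrite E' in e1.
    have [eq1 eq2] := ep_word (ep_trans e1 e2).
    have [a1 a2] := memAA _ pA; have [b1 b2] := memAA _ qA.
    move: a1 a2 b1 b2 eq1 eq2 => /= a1 a2 b1 b2 eq1 eq2.
    have E1 : u1 = u1' by apply: uniqA => //.
    subst u1'.
    have sh_eq : forall u v, equiv_word v (sh u v).
      by move=> u v; exists (gsh u); split => // x y _ _; apply: gsh_inj.
    congr (_, _); apply: uniqA => //.
    apply: ew_trans (sh_eq u1 u2) _; apply: ew_trans eq2 _; apply: ew_sym; apply: sh_eq.
  + by move=> p /mapP [q qA ->]; exact: (proj1 (HrS _ (gp _ qA))).
Qed.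

Unset Implicit Arguments.
Local Open Scope ring_scope.

Lemma sumr_const_seqR (R : nzRingType) (T : Type) (r : seq T) (c : R) :
  \sum_(a <- r) c = (size r)%:R * c.
Proof.
elim: r => [|a r IH]; first by rewrite big_nil mul0r.
by rewrite big_cons IH /= -[(size r).+1]addn1 natrD mulrDl mul1r addrC.
Qed.

Theorem mainTheorem16 (R : realFieldType) (md mo : nat -> R) (k : nat) :
  md 1%N = 0 -> mo 1%N = 0 -> mo 2%N = 1 ->
  odd k -> (3 <= k)%N ->
  (forall w1 w2 : seq nat, good_pair k (w1, w2) ->
     [/\ (forall w, w \in [:: w1; w2] ->
            (Ncount (1, 1) w == 1)%N && wigner (checkw w) && (size (checkw w) == k)),
         (forall x, (x \in w1) && (x \in w2) = (x == 1)%N) &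
         Ecov md mo w1 w2 = md 2%N])
  /\
  (forall (S : seq (seq nat * seq nat)) (A : seq (seq nat)),
     reps (good_pair k) equiv_pair S ->
     reps (ak_word k) equiv_word A ->
     \sum_(a <- S) Ecov md mo a.1 a.2 = ((size A) ^ 2)%:R * md 2%N).
Proof.
move=> hmd1 hmo1 hmo2 hodd hk; split.
- move=> w1 w2 hg; have [hw hs _ _ _] := partI hg; split => //.
  exact: partIII hmd1 hmo2 hg.
- move=> S A hS hA.
  have hS' := hS; case: hS' => [_ allS _ _].
  rewrite (eq_big_seq (fun _ => md 2%N)); last first.
    by move=> [a1 a2] aS; apply: partIII hmd1 hmo2 (allP allS _ aS).
  by rewrite sumr_const_seqR (partIV hS hA).
Qed.
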